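(* Let $1\le\ell\le r$ and let $\mathscr I=[I_0,I_1,\dots,I_\ell]$ be an ideal of $\Omega_{H_\ell}$ with $I_0=p\mathbb{Z}$. Then for each $1\le i\le\ell$: (1) $I_i=S(I_{i-1})$ or $I_i=L(I_{i-1})$; and (2) $I_i=J_{i,0}(p^{k+1})$ for some $0\le k\le i$.
   Context: Fix a prime $p$ and an integer $r\ge0$. For $0\le k\le r$ let $R_k$ be the commutative ring which is free as a $\mathbb{Z}$-module with basis $X_{k,0},\dots,X_{k,k}$ and multiplication $X_{k,i}X_{k,j}=p^{k-\max(i,j)}X_{k,\min(i,j)}$; thus $X_{k,k}=1$, and an integer $n$ is identified with $nX_{k,k}$. For $0\le k\le\ell\le r$ define: the additive map $\mathrm{ind}^\ell_k:R_k\to R_\ell$, $X_{k,i}\mapsto X_{\ell,i}$; the ring homomorphism $\mathrm{res}^\ell_k:R_\ell\to R_k$, $\mathrm{res}^\ell_k(X_{\ell,i})=p^{\ell-k}X_{k,i}$ if $i\le k$ and $=p^{\ell-i}$ if $i\ge k$; and the multiplicative map $\mathrm{jnd}^\ell_k:R_k\to R_\ell$, $$\mathrm{jnd}^\ell_k\Big(\sum_{i=0}^k m_iX_{k,i}\Big)=m_kX_{\ell,\ell}+\sum_{k\le i<\ell}\frac{m_k^{p^{\ell-i}}-m_k^{p^{\ell-i-1}}}{p^{\ell-i}}X_{\ell,i}+\sum_{0\le i<k}\frac{(\sum_{s=i}^k m_sp^{k-s})^{p^{\ell-k}}-(\sum_{s=i+1}^k m_sp^{k-s})^{p^{\ell-k}}}{p^{\ell-i}}X_{\ell,i}$$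 ($m_i\in\mathbb{Z}$). An ideal of $\Omega_{H_n}$ is a sequence $[I_0,\dots,I_n]$ of ideals $I_k\subseteq R_k$ such that for every $1\le k\le n$: $\mathrm{ind}^k_{k-1}(I_{k-1})\subseteq I_k$, $\mathrm{res}^k_{k-1}(I_k)\subseteq I_{k-1}$, $\mathrm{jnd}^k_{k-1}(I_{k-1})\subseteq I_k$. For an ideal $I\subseteq R_{i-1}$: $L(I)=(\mathrm{res}^i_{i-1})^{-1}(I)\subseteq R_i$, and $S(I)$ is the ideal of $R_i$ generated by $\mathrm{ind}^i_{i-1}(I)\cup\mathrm{jnd}^i_{i-1}(I)$. For $0\le j\le i$, $F_{i,j}=X_{i,j}-p^{i-j}$; for $x\in\mathbb{Z}$ and $i\ge1$, $J_{i,0}(x)\subseteq R_i$ is the ideal generated by $x,F_{i,0},\dots,F_{i,i-1}$. *)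

(* Defs.v *)
From HB Require Import structures.
From mathcomp Require Import all_boot all_order all_algebra.
Set Implicit Arguments. Unset Strict Implicit. Unset Printing Implicit Defensive.
Import Order.TTheory GRing.Theory Num.Theory.
Local Open Scope ring_scope.

(* An element of R_k = sum_{i<=k} m_i X_{k,i} is its coefficient vector. *)
Definition Rk (k : nat) := {ffun 'I_k.+1 -> int}.

Section Defs.
Variable p : nat.

Definition pz (e : nat) : int := (p%:Z) ^+ e.

Definition zeroR k : Rk k := [ffun _ => 0].
Definition addR k (x y : Rk k) : Rk k := [ffun j => x j + y j].

Definition intR k (z : int) : Rk k := [ffun j : 'I_k.+1 => if val j == k then z else 0].

Definition basisX k (j : nat) : Rk k := [ffun t : 'I_k.+1 => if val t == j then 1 else 0].

(* X_{k,i} X_{k,j} = p^{k - max(i,j)} X_{k,min(i,j)}, extended bilinearly *)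
Definition mulR k (x y : Rk k) : Rk k :=
  [ffun m : 'I_k.+1 => \sum_(i < k.+1) \sum_(j < k.+1)
     (if minn i j == val m then x i * y j * pz (k - maxn i j) else 0)].

Definition ind k l (x : Rk k) : Rk l :=
  [ffun j : 'I_l.+1 => if (val j <= k)%N then x (inord j) else 0].

(* res^l_k : X_{l,i} |-> p^{l-k} X_{k,i} (i <= k), p^{l-i} (i >= k), additively *)
Definition res l k (x : Rk l) : Rk k :=
  [ffun j : 'I_k.+1 =>
     if (val j < k)%N then pz (l - k) * x (inord j)
     else \sum_(i < l.+1 | (k <= i)%N) pz (l - i) * x i].

Definition partS k (x : Rk k) (i : nat) : int :=
  \sum_(s < k.+1 | (i <= s)%N) x s * pz (k - s).

(* jnd^l_k, the multiplicative map (the divisions are exact) *)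
Definition jnd k l (x : Rk k) : Rk l :=
  [ffun i : 'I_l.+1 =>
     if val i == l then x ord_max
     else if (k <= i)%N then
       ((x ord_max ^+ (p ^ (l - i)) - x ord_max ^+ (p ^ (l - i - 1))) %/ pz (l - i))%Z
     else
       ((partS x i ^+ (p ^ (l - k)) - partS x i.+1 ^+ (p ^ (l - k))) %/ pz (l - i))%Z].

Definition is_ideal k (I : Rk k -> Prop) : Prop :=
  I (zeroR k) /\ (forall x y, I x -> I y -> I (addR x y)) /\
  (forall a x, I x -> I (mulR a x)).

Definition gen k (G : Rk k -> Prop) : Rk k -> Prop :=
  fun x => forall J, is_ideal J -> (forall y, G y -> J y) -> J x.

Definition is_omega_ideal (n : nat) (I : forall k, Rk k -> Prop) : Prop :=
  (forall k, (k <= n)%N -> is_ideal (I k)) /\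
  (forall k, (k < n)%N ->
     (forall x, I k x -> I k.+1 (ind k.+1 x)) /\
     (forall x, I k.+1 x -> I k (res k x)) /\
     (forall x, I k x -> I k.+1 (jnd k.+1 x))).

Definition Lid i (I : Rk i -> Prop) : Rk i.+1 -> Prop :=
  fun y => I (res i y).
Definition Sid i (I : Rk i -> Prop) : Rk i.+1 -> Prop :=
  gen (fun y => exists x, I x /\ (y = ind i.+1 x \/ y = jnd i.+1 x)).

Definition Fij i (j : nat) : Rk i := addR (basisX i j) (intR i (- pz (i - j))).

Definition J0 i (z : int) : Rk i -> Prop :=
  gen (fun y => y = intR i z \/ exists j : nat, (j < i)%N /\ y = Fij i j).

End Defs.

(* Main.v *)
Require Import Defs.
From HB Require Import structures.
From mathcomp Require Import all_boot all_order all_algebra.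
From mathcomp Require Import zify ring.
Import Order.TTheory GRing.Theory Num.Theory.
Set Implicit Arguments. Unset Strict Implicit. Unset Printing Implicit Defensive.
Local Open Scope ring_scope.

Definition scaleR k (c : int) (x : Rk k) : Rk k := [ffun j => c * x j].

Lemma mulR_intR (p k : nat) (c : int) (x : Rk k) :
  mulR p (intR k c) x = scaleR c x.
Proof.
apply/ffunP=> m; rewrite !ffunE (bigD1 ord_max) //=.
rewrite [X in _ + X]big1; last first.
  move=> i Hi; rewrite big1 // => j _.
  rewrite ffunE; case: (val i == k) /eqP => Hk; last by rewrite mul0r mul0r if_same.
  have Ei : i = ord_max by apply: val_inj.
  by rewrite Ei eqxx in Hi.
rewrite addr0 (bigD1 m) //= big1; last first.
  move=> j Hj; rewrite ffunE eqxx /=.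
  have -> : minn k j = j by apply/minn_idPr; rewrite -ltnS ltn_ord.
  by rewrite (_ : (j == m :> nat) = false) //; exact: negbTE Hj.
rewrite ffunE eqxx /= addr0.
have -> : minn k m = m by apply/minn_idPr; rewrite -ltnS ltn_ord.
have -> : maxn k m = k by apply/maxn_idPl; rewrite -ltnS ltn_ord.
by rewrite eqxx subnn /pz expr0 mulr1.
Qed.

Lemma ideal_scale (p k : nat) (J : Rk k -> Prop) c x :
  is_ideal p J -> J x -> J (scaleR c x).
Proof. by move=> [_ [_ HM]] Hx; rewrite -(mulR_intR p); apply: HM. Qed.

Lemma ideal_add (p k : nat) (J : Rk k -> Prop) x y :
  is_ideal p J -> J x -> J y -> J (addR x y).
Proof. by move=> [_ [HA _]]; apply: HA. Qed.

Lemma scale_intR k c n : scaleR c (intR k n) = intR k (c * n).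
Proof. by apply/ffunP=> j; rewrite !ffunE; case: ifP; rewrite ?mulr0. Qed.

Lemma add_intR k m n : addR (intR k m) (intR k n) = intR k (m + n).
Proof. by apply/ffunP=> j; rewrite !ffunE; case: ifP; rewrite ?addr0. Qed.

Lemma gen_ideal (p k : nat) (G : Rk k -> Prop) : is_ideal p (gen p G).
Proof.
rewrite /is_ideal /gen; split; first by move=> J; case.
split; first by move=> x y Hx Hy J HJ HG; apply: (ideal_add HJ); [apply: Hx|apply: Hy].
move=> a x Hx J HJ HG; case: (HJ) => [_ [_ HM]]; apply: HM; exact: Hx.
Qed.

Lemma gen_incl (p k : nat) (G : Rk k -> Prop) x : G x -> gen p G x.
Proof. by move=> Gx J _ HG; apply: HG. Qed.

Lemma gen_min (p k : nat) (G J : Rk k -> Prop) x :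
  is_ideal p J -> (forall y, G y -> J y) -> gen p G x -> J x.
Proof. by move=> HJ HG Hx; apply: Hx. Qed.

Lemma partS_add (p k : nat) (x y : Rk k) t :
  partS p (addR x y) t = partS p x t + partS p y t.
Proof. by rewrite /partS -big_split /=; apply: eq_bigr => s _; rewrite ffunE mulrDl. Qed.

Lemma partS_scale (p k : nat) c (x : Rk k) t :
  partS p (scaleR c x) t = c * partS p x t.
Proof. by rewrite /partS mulr_sumr; apply: eq_bigr => s _; rewrite ffunE mulrA. Qed.

Lemma sum_single n (j : 'I_n) (P : pred 'I_n) (c : int) :
  \sum_(s < n | P s) (if s == j then c else 0) = if P j then c else 0.
Proof.
rewrite big_mkcond (bigD1 j) //= eqxx big1 ?addr0 // => s Hs.
by rewrite (negbTE Hs) if_same.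
Qed.

Lemma partS_intR (p k : nat) z t :
  partS p (intR k z) t = if (t <= k)%N then z else 0.
Proof.
rewrite /partS (eq_bigr (fun s : 'I_k.+1 => if s == ord_max then z else 0)).
  by rewrite sum_single.
move=> s _; rewrite ffunE; case: eqP => [Hs|Hs].
  have -> : s = ord_max by apply: val_inj.
  by rewrite eqxx /= subnn /pz expr0 mulr1.
rewrite mul0r; case: eqP => // Es; by rewrite Es in Hs.
Qed.

Lemma partS_basisX (p k j : nat) t : (j <= k)%N ->
  partS p (basisX k j) t = if (t <= j)%N then pz p (k - j) else 0.
Proof.
move=> Hj.
rewrite /partS (eq_bigr (fun s : 'I_k.+1 => if s == inord j then pz p (k - j) else 0)).
  by rewrite sum_single inordK.
move=> s _; rewrite ffunE; case: eqP => [Hs|Hs].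
  have -> : s = inord j by apply: val_inj; rewrite /= inordK.
  by rewrite eqxx mul1r inordK.
rewrite mul0r; case: eqP => // Es; by rewrite Es /= inordK in Hs.
Qed.

Definition phi0 (p k : nat) (x : Rk k) := partS p x 0.

Lemma phi0_F (p i j : nat) : (j <= i)%N -> phi0 p (Fij p i j) = 0.
Proof.
move=> Hj; rewrite /phi0 /Fij partS_add partS_intR partS_basisX //.
by rewrite !leq0n subrr.
Qed.

Lemma phi0_intR (p i : nat) z : phi0 p (intR i z) = z.
Proof. by rewrite /phi0 partS_intR. Qed.

Lemma ideal_sum (p k : nat) (J : Rk k -> Prop) n (c : 'I_n -> int) (f : 'I_n -> Rk k) :
  is_ideal p J -> (forall j, J (f j)) -> J [ffun t => \sum_(j < n) c j * f j t].
Proof.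
move=> HJ; elim: n c f => [|n IH] c f Hf.
  have -> : [ffun t => \sum_(j < 0) c j * f j t] = zeroR k.
    by apply/ffunP=> t; rewrite !ffunE big_ord0.
  by case: HJ.
have -> : [ffun t => \sum_(j < n.+1) c j * f j t] =
  addR [ffun t => \sum_(j < n) c (widen_ord (leqnSn n) j) * f (widen_ord (leqnSn n) j) t]
       (scaleR (c ord_max) (f ord_max)).
  by apply/ffunP=> t; rewrite !ffunE big_ord_recr.
apply: (ideal_add HJ); first by apply: IH.
by apply: ideal_scale; [exact: HJ|exact: Hf].
Qed.

Lemma decomp (p k : nat) (x : Rk k) :
  x = addR (intR k (phi0 p x))
        [ffun t => \sum_(j < k) x (widen_ord (leqnSn k) j) * Fij p k j t].
Proof.
apply/ffunP=> t; rewrite !ffunE.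
have EF : forall (j : 'I_k), Fij p k j t =
   (if val t == val j then 1 else 0) + (if val t == k then - pz p (k - j) else 0).
  by move=> j; rewrite /Fij !ffunE.
case: eqP => Ht.
  have Et : t = ord_max by apply: val_inj.
  have H1 : \sum_(j < k) x (widen_ord (leqnSn k) j) * Fij p k j t
     = - \sum_(j < k) x (widen_ord (leqnSn k) j) * pz p (k - j).
    rewrite -sumrN; apply: eq_bigr => j _.
    rewrite EF Ht eqxx (_ : (k == j) = false); last by apply/negbTE; rewrite neq_ltn ltn_ord orbT.
    by rewrite add0r mulrN.
  have H2 : phi0 p x = \sum_(j < k) x (widen_ord (leqnSn k) j) * pz p (k - j) + x ord_max.
    rewrite /phi0 /partS big_mkcond big_ord_recr /= subnn /pz expr0 mulr1.
    done.
  rewrite H1 H2 Et /=; ring.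
rewrite add0r.
have Htk : (t < k)%N by move: (ltn_ord t); rewrite ltnS leq_eqVlt (introF eqP Ht).
have Htk' : (val t == k) = false by apply/eqP.
rewrite (bigD1 (Ordinal Htk)) // (EF (Ordinal Htk)) /= eqxx Htk' big1 ?addr0.
  by rewrite mulr1; congr (x _); apply: val_inj.
move=> j Hj; rewrite EF Htk' (_ : (val t == val j) = false) ?addr0 ?mulr0 //.
apply/negbTE; apply: contra Hj => /eqP E; apply/eqP; apply: val_inj; by rewrite /= E.
Qed.

Lemma decompJ (p k : nat) (J : Rk k -> Prop) x :
  is_ideal p J -> (forall j, (j < k)%N -> J (Fij p k j)) ->
  J x <-> J (intR k (phi0 p x)).
Proof.
move=> HJ HF.
have HT : J [ffun t => \sum_(j < k) x (widen_ord (leqnSn k) j) * Fij p k j t].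
  apply: (@ideal_sum p k J k (fun j => x (widen_ord (leqnSn k) j)) (fun j : 'I_k => Fij p k j) HJ) => j; exact: HF.
have E := decomp p x.
split=> H.
  have -> : intR k (phi0 p x) = addR x (scaleR (-1)
      [ffun t => \sum_(j < k) x (widen_ord (leqnSn k) j) * Fij p k j t]).
    apply/ffunP=> t; move/ffunP/(_ t): E; rewrite !ffunE => {1}->; ring.
  apply: (ideal_add HJ H); apply: ideal_scale; [exact: HJ|exact: HT].
rewrite E; apply: ideal_add; [exact: HJ|exact: H|exact: HT].
Qed.

Lemma char_div (p k : nat) (J : Rk k -> Prop) z :
  is_ideal p J -> (forall j, (j < k)%N -> J (Fij p k j)) -> J (intR k z) ->
  (forall x, J x -> (z %| phi0 p x)%Z) ->
  forall x, J x <-> (z %| phi0 p x)%Z.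
Proof.
move=> HJ HF Hz Hd x; split; first exact: Hd.
move=> /dvdzP [c Hc]; apply/(decompJ _ HJ HF); rewrite Hc -scale_intR.
apply: ideal_scale; [exact: HJ|exact: Hz].
Qed.

Lemma char_J0 (p k : nat) (J : Rk k -> Prop) z :
  is_ideal p J -> (forall j, (j < k)%N -> J (Fij p k j)) -> J (intR k z) ->
  (forall x, J x -> (z %| phi0 p x)%Z) ->
  forall x, J x <-> @J0 p k z x.
Proof.
move=> HJ HF Hz Hd x; split.
  have G0 : is_ideal p (@J0 p k z) by apply: gen_ideal.
  have GF : forall j, (j < k)%N -> @J0 p k z (Fij p k j).
    by move=> j Hj; apply: gen_incl; right; exists j.
  have Gz : @J0 p k z (intR k z) by apply: gen_incl; left.
  have Gd : forall y, @J0 p k z y -> (z %| phi0 p y)%Z.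
    move=> y Hy; apply: Hd; apply: (gen_min HJ _ Hy) => w [->|[j [Hj ->]]] //; exact: HF.
  move=> Jx; apply/(char_div G0 GF Gz Gd); exact: Hd.
move=> Hx; apply: (gen_min HJ _ Hx) => w [->|[j [Hj ->]]] //; exact: HF.
Qed.

Lemma phi0_res (p k : nat) (y : Rk k.+1) : phi0 p (res p k y) = phi0 p y.
Proof.
pose g := fun i : nat => y (inord i) * pz p (k.+1 - i).
have Ey : phi0 p y = \sum_(0 <= i < k.+2) g i.
  rewrite /phi0 /partS big_mkcond big_mkord; apply: eq_bigr => i _ /=.
  by rewrite /g inord_val.
rewrite Ey big_nat_recr //= big_nat_recr //=.
rewrite /phi0 /partS big_mkcond big_ord_recr /= ffunE /= ltnn subnn.
rewrite -addrA; congr (_ + _).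
  rewrite big_mkord; apply: eq_bigr => j _ /=.
  rewrite ffunE /= ltn_ord /g /pz.
  have Hj : (j <= k)%N by apply: ltnW.
  rewrite subSnn expr1 subSn // exprS; ring.
rewrite /pz expr0 mulr1 big_mkcond big_ord_recr big_ord_recr /= big1.
  rewrite leqnn leqnSn add0r /g /pz subnn subSnn.
  have -> : (inord k : 'I_k.+2) = widen_ord (leqnSn k.+1) ord_max by apply: val_inj; rewrite /= inordK.
  have -> : (inord k.+1 : 'I_k.+2) = ord_max by apply: val_inj; rewrite /= inordK.
  by rewrite expr1 expr0 mulrC mul1r mulr1.
by move=> i _; rewrite leqNgt ltn_ord.
Qed.


Lemma ind_F (p i j : nat) : (j < i)%N ->
  Fij p i.+1 j = addR (ind i.+1 (Fij p i j)) (scaleR (pz p (i - j)) (Fij p i.+1 i)).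
Proof.
move=> Hji; apply/ffunP=> t; rewrite !ffunE.
have Ht := ltn_ord t.
case: (leqP t i) => Hti.
  have Ei : val (inord t : 'I_i.+1) = val t by rewrite /= inordK ?ltnS.
  rewrite Ei (_ : (val t == i.+1) = false); last first.
    by apply/negbTE; rewrite neq_ltn ltnS Hti.
  case: (val t == j); case: (val t == i); ring.
have Et : val t = i.+1 by apply/eqP; rewrite eqn_leq Hti -ltnS Ht.
rewrite Et eqxx (_ : (i.+1 == j) = false); last by apply/negbTE; rewrite neq_ltn ltnS (ltnW Hji) orbT.
rewrite (_ : (i.+1 == i) = false); last by apply/negbTE; rewrite neq_ltn ltnSn orbT.
rewrite /pz subSnn subSn ?(ltnW Hji) // exprS; ring.
Qed.

Lemma jnd_A (p : nat) : (1 < p)%N ->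
  Fij p 1 0 = addR (scaleR (-1) (jnd p 1 (intR 0 p%:Z)))
                   (scaleR (pz p (p - 2)) (ind 1 (intR 0 p%:Z))).
Proof.
move=> Hp; apply/ffunP=> t; rewrite !ffunE.
case: t => [[|[|t]] Ht] //=.
  case: (inord 0 : 'I_1) => [[|//] ?] /=.
  rewrite (subn0 1) subnn expn1 expn0 /pz expr1.
  have E : (p%:Z) ^+ p - (p%:Z) ^+ 1 = ((p%:Z) ^+ (p - 2) * p - 1) * p.
    have -> : (p%:Z) ^+ p = p%:Z ^+ (p - 2) * p * p.
      by rewrite -!exprSr; congr (_ ^+ _); lia.
    by rewrite expr1; ring.
  rewrite E mulzK; last by rewrite eqz_nat gtn_eqF // ltnW.
  ring.
by rewrite /pz (subn0 1) expr1 mulr0; ring.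
Qed.

Lemma hxF (p n : nat) (s : 'I_n.+2) :
  Fij p n.+1 n s = (if val s == n then 1 else 0) + (if val s == n.+1 then - (p%:Z) else 0).
Proof. by rewrite !ffunE /pz subSnn expr1. Qed.

Lemma hPF (p n : nat) t :
  partS p (Fij p n.+1 n) t = (if (t <= n)%N then p%:Z else 0) - (if (t <= n.+1)%N then p%:Z else 0).
Proof.
rewrite /Fij partS_add partS_intR partS_basisX // /pz subSnn expr1.
by case: (t <= n)%N; case: (t <= n.+1)%N; rewrite ?subr0 ?addr0 ?oppr0 ?add0r ?sub0r.
Qed.

Lemma powsplit (a : int) (p : nat) : (1 < p)%N -> a ^+ p = a ^+ (p - 2) * a * a.
Proof. by move=> Hp; rewrite -!exprSr; congr (_ ^+ _); lia. Qed.

Lemma jnd_B_val (p n : nat) (t : 'I_n.+3) : (1 < p)%N ->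
  jnd p n.+2 (Fij p n.+1 n) t =
  if val t == n.+2 then - (p%:Z)
  else if val t == n.+1 then p%:Z * ((-1) ^+ p * p%:Z ^+ (p - 2)) + 1
  else if val t == n then - ((-1) ^+ p * p%:Z ^+ (p - 2))
  else 0.
Proof.
move=> Hp.
have Hq : (- (p%:Z)) ^+ p = p%:Z ^+ 2 * ((-1) ^+ p * p%:Z ^+ (p - 2)).
  by rewrite (exprNn (p%:Z)) (powsplit (p%:Z) Hp) expr2; ring.
have Hp0 : (p%:Z) != 0 by rewrite eqz_nat gtn_eqF // ltnW.
rewrite /jnd ffunE hxF /= eqxx (_ : (n.+1 == n) = false); last by apply/eqP; lia.
rewrite add0r.
case: t => m Hm /=.
case: (ltngtP m n) => Hmn.
- rewrite (_ : (m == n.+2) = false); last by apply/eqP; lia.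
  rewrite (_ : (m == n.+1) = false); last by apply/eqP; lia.
  have E1 : (n.+2 - n.+1 = 1)%N by rewrite subSS subSnn.
  rewrite !hPF E1 expn1 (_ : (m <= n)%N = true); last by apply: ltnW.
  rewrite (_ : (m <= n.+1)%N = true); last by apply: leq_trans (leqnSn n); apply: ltnW.
  rewrite (_ : (m.+1 <= n)%N = true) //.
  rewrite (_ : (m.+1 <= n.+1)%N = true); last by rewrite ltnS ltnW.
  by rewrite !subrr div0z.
- case: eqP => // Hm2.
  have -> : m = n.+1 by lia.
  rewrite eqxx subSnn subnn expn1 expn0 expr1 Hq /pz expr1.
  rewrite (_ : p%:Z ^+ 2 * ((-1) ^+ p * p%:Z ^+ (p - 2)) - - p%:Z =
     (p%:Z * ((-1) ^+ p * p%:Z ^+ (p - 2)) + 1) * p%:Z); last by rewrite expr2; ring.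
  by rewrite mulzK.
- subst m.
  rewrite (_ : (n == n.+2) = false); last by apply/eqP; lia.
  rewrite (_ : (n == n.+1) = false); last by apply/eqP; lia.
  rewrite !hPF leqnn leqnSn ltnn (_ : (n.+2 - n.+1 = 1)%N); last by lia.
  rewrite (_ : (n.+2 - n = 2)%N); last by lia.
  rewrite ltnSn subrr !sub0r expn1 expr0n (_ : (p == 0)%N = false); last by apply/eqP; lia.
  rewrite sub0r Hq /pz.
  rewrite (_ : - (p%:Z ^+ 2 * ((-1) ^+ p * p%:Z ^+ (p - 2))) =
     (- ((-1) ^+ p * p%:Z ^+ (p - 2))) * p%:Z ^+ 2); last by ring.
  by rewrite mulzK // expf_neq0.
Qed.


Lemma jnd_B (p n : nat) : (1 < p)%N ->
  Fij p n.+2 n.+1 = addR (jnd p n.+2 (Fij p n.+1 n))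
     (scaleR ((-1) ^+ p * p%:Z ^+ (p - 2)) (ind n.+2 (Fij p n.+1 n))).
Proof.
move=> Hp; apply/ffunP=> t.
rewrite [in RHS]ffunE jnd_B_val // [in RHS]ffunE.
rewrite [ind _ _ _]ffunE.
rewrite [LHS]ffunE [basisX _ _ _]ffunE [intR _ _ _]ffunE /pz subSnn expr1.
case: (leqP t n.+1) => Ht.
  rewrite hxF.
  have Ei : val (inord t : 'I_n.+2) = val t by rewrite /= inordK ?ltnS.
  rewrite Ei.
  case: t Ht Ei => m Hm /= Ht _.
  case: eqP => H1; case: eqP => H2; case: eqP => H3; try lia; ring.
have Et : val t = n.+2 by apply/eqP; rewrite eqn_leq Ht andbT -ltnS ltn_ord.
rewrite Et !eqxx (_ : (n.+2 == n.+1) = false); last by apply/eqP; lia.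
ring.
Qed.


Lemma ind_intR (p i : nat) (z : int) :
  intR i.+1 (z * p%:Z) = addR (ind i.+1 (intR i z)) (scaleR (- z) (Fij p i.+1 i)).
Proof.
apply/ffunP=> t; rewrite !ffunE /pz subSnn expr1.
case: (leqP t i) => Ht.
  have Ei : val (inord t : 'I_i.+1) = val t by rewrite /= inordK ?ltnS.
  rewrite Ei.
  case: t Ht Ei => m Hm /= Ht _.
  case: eqP => H1; case: eqP => H2; try lia; ring.
have Et : val t = i.+1 by apply/eqP; rewrite eqn_leq Ht andbT -ltnS ltn_ord.
rewrite Et !eqxx (_ : (i.+1 == i) = false); last by apply/eqP; lia.
ring.
Qed.

Lemma S_top (p i k : nat) (J : Rk i -> Prop) : (1 < p)%N -> (k <= i)%N ->
  (forall x, J x <-> (pz p k.+1 %| phi0 p x)%Z) ->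
  @Sid p i J (Fij p i.+1 i).
Proof.
move=> Hp Hki HI.
have HS : is_ideal p (@Sid p i J) by apply: gen_ideal.
have Sind : forall x, J x -> @Sid p i J (ind i.+1 x).
  by move=> x Hx; apply: gen_incl; exists x; split=> //; left.
have Sjnd : forall x, J x -> @Sid p i J (jnd p i.+1 x).
  by move=> x Hx; apply: gen_incl; exists x; split=> //; right.
case: i J Hki HI HS Sind Sjnd => [|n] J Hki HI HS Sind Sjnd.
  have Hk0 : k = 0%N by apply/eqP; rewrite -leqn0.
  have Ip : J (intR 0 p%:Z) by apply/HI; rewrite phi0_intR Hk0 /pz expr1.
  rewrite (jnd_A Hp); apply: (ideal_add HS).
    exact: (ideal_scale _ HS (Sjnd _ Ip)).
  exact: (ideal_scale _ HS (Sind _ Ip)).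
have IF : J (Fij p n.+1 n) by apply/HI; rewrite phi0_F ?dvdz0.
rewrite (jnd_B n Hp); apply: (ideal_add HS (Sjnd _ IF)).
exact: (ideal_scale _ HS (Sind _ IF)).
Qed.

From Stdlib Require Import Classical.

Lemma step (p l : nat) (I : forall k, Rk k -> Prop) (i k : nat) :
  prime p -> is_omega_ideal p l I -> (i < l)%N -> (k <= i)%N ->
  (forall x, I i x <-> (pz p k.+1 %| phi0 p x)%Z) ->
  ((forall x, I i.+1 x <-> @Sid p i (I i) x) \/ (forall x, I i.+1 x <-> @Lid p i (I i) x)) /\
  (exists k' : nat, (k' <= i.+1)%N /\ forall x, I i.+1 x <-> (pz p k'.+1 %| phi0 p x)%Z).
Proof.
move=> Hpr [HOi HOc] Hil Hki HI.
have Hp : (1 < p)%N by apply: prime_gt1.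
have HJ : is_ideal p (I i.+1) by apply: HOi.
have [Hind [Hres Hjnd]] := HOc i Hil.
set a := pz p k.+1.
have HS : is_ideal p (@Sid p i (I i)) by apply: gen_ideal.
have SI : forall y, @Sid p i (I i) y -> I i.+1 y.
  move=> y Hy; apply: (gen_min HJ _ Hy) => w [x [Hx [->|->]]].
    exact: Hind.
  exact: Hjnd.
have Sind : forall x, I i x -> @Sid p i (I i) (ind i.+1 x).
  by move=> x Hx; apply: gen_incl; exists x; split=> //; left.
have Sjnd : forall x, I i x -> @Sid p i (I i) (jnd p i.+1 x).
  by move=> x Hx; apply: gen_incl; exists x; split=> //; right.
have IF : forall j, (j < i)%N -> I i (Fij p i j).
  by move=> j Hj; apply/HI; rewrite phi0_F ?dvdz0 // ltnW.
have Stop : @Sid p i (I i) (Fij p i.+1 i).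
  exact: (S_top Hp Hki HI).
have SF : forall j, (j < i.+1)%N -> @Sid p i (I i) (Fij p i.+1 j).
  move=> j; rewrite ltnS leq_eqVlt => /orP [/eqP ->|Hj]; first exact: Stop.
  rewrite (ind_F p Hj); apply: (ideal_add HS (Sind _ (IF _ Hj))).
  exact: (ideal_scale _ HS Stop).
have Sa : @Sid p i (I i) (intR i.+1 (a * p%:Z)).
  rewrite ind_intR; apply: (ideal_add HS).
    by apply: Sind; apply/HI; rewrite phi0_intR.
  exact: (ideal_scale _ HS Stop).
have IFs : forall j, (j < i.+1)%N -> I i.+1 (Fij p i.+1 j) by move=> j Hj; apply: SI; apply: SF.
have Ia : I i.+1 (intR i.+1 (a * p%:Z)) by apply: SI.
have HL : forall y, @Lid p i (I i) y <-> (a %| phi0 p y)%Z.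
  by move=> y; rewrite /Lid HI phi0_res.
have IL : forall y, I i.+1 y -> (a %| phi0 p y)%Z by move=> y Hy; apply/HL; apply: Hres.
have Eap : a * p%:Z = pz p k.+2 by rewrite /a /pz [in RHS]exprSr.
case: (classic (exists y, I i.+1 y /\ ~ (a * p%:Z %| phi0 p y)%Z)) => [[y [Hy Hny]]|Hno].
  have Ia' : I i.+1 (intR i.+1 a).
    have /dvdzP [u Hu] := IL y Hy.
    have Hpu : ~~ (p %| `|u|)%N.
      apply/negP=> Hpu; apply: Hny; rewrite Hu mulrC.
      by apply: dvdz_mul => //; apply: dvdzz.
    have /coprimezP [[s t] /= Hst] : coprimez p%:Z u.
      by rewrite coprimezE prime_coprime.
    have -> : intR i.+1 a = addR (scaleR s (intR i.+1 (a * p%:Z))) (scaleR t (intR i.+1 (phi0 p y))).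
      by rewrite !scale_intR add_intR Hu; congr intR; rewrite -[LHS]mulr1 -Hst; ring.
    apply: (ideal_add HJ (ideal_scale _ HJ Ia)).
    apply: (ideal_scale _ HJ); by case: (@decompJ p i.+1 (I i.+1) y HJ IFs) => H _; apply: H.
  have Hc := char_div HJ IFs Ia' IL.
  split; first by right=> x; rewrite Hc HL.
  by exists k; split; [apply: leqW|].
have Hd : forall x, I i.+1 x -> (a * p%:Z %| phi0 p x)%Z.
  move=> x Hx; apply: NNPP => Hn; apply: Hno; by exists x.
have Hc := char_div HJ IFs Ia Hd.
have Hc' := char_div HS SF Sa (fun x Hx => Hd x (SI x Hx)).
split; first by left=> x; rewrite Hc Hc'.
by exists k.+1; split; [|rewrite -Eap].
Qed.


Lemma phi0_0 (p : nat) (x : Rk 0) : phi0 p x = x ord0.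
Proof. by rewrite /phi0 /partS big_mkcond big_ord1 /= subnn /pz expr0 mulr1. Qed.

Theorem corollary6 (p r l : nat) (I : forall k, Rk k -> Prop) :
  prime p -> (1 <= l <= r)%N ->
  is_omega_ideal p l I ->
  (forall x : Rk 0, I 0%N x <-> (p%:Z %| x ord0)%Z) ->
  forall i : nat, (i < l)%N ->
    ((forall x, I i.+1 x <-> @Sid p i (I i) x) \/ (forall x, I i.+1 x <-> @Lid p i (I i) x)) /\
    (exists k : nat, (k <= i.+1)%N /\
       forall x, I i.+1 x <-> @J0 p i.+1 (pz p k.+1) x).
Proof.
move=> Hpr _ HO H0.
have P : forall i, (i <= l)%N -> exists k, (k <= i)%N /\
    forall x, I i x <-> (pz p k.+1 %| phi0 p x)%Z.
  elim=> [|i IH] Hi.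
    exists 0%N; split=> // x; by rewrite H0 phi0_0 /pz expr1.
  have [k [Hk HI]] := IH (ltnW Hi).
  by have [_ H] := step Hpr HO Hi Hk HI.
move=> i Hi.
have [k [Hk HI]] := P i (ltnW Hi).
have [H1 [k' [Hk' HI']]] := step Hpr HO Hi Hk HI.
split=> //; exists k'; split=> // x.
have HJ : is_ideal p (I i.+1) by case: HO => HOi _; apply: HOi.
apply: (char_J0 HJ).
- by move=> j Hj; apply/HI'; rewrite phi0_F ?dvdz0 // ltnW.
- by apply/HI'; rewrite phi0_intR dvdzz.
- by move=> y /HI'.
Qed.
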